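(* Let $K$ be an algebraically closed field of characteristic zero. For any integers $s\ge 1$ and $c\ge 2$ there is an Artinian complete intersection graded $K$-algebra $A_F=K[x_1,\dots,x_c]/\operatorname{Ann}(F)$ of codimension $c$ whose Macaulay dual generator $F\in K[X_1,\dots,X_c]$ is a sum of $s$ monomials. Moreover, this $A_F$ satisfies the strong Lefschetz property.
   Context: $K[X_1,\dots,X_c]$ is the divided power algebra, a module over $R=K[x_1,\dots,x_c]$ via contraction $x_i\circ X_j^k=\delta_{ij}X_j^{k-1}$ if $k>0$ and $0$ otherwise; for homogeneous $F$, $\operatorname{Ann}(F)=\{f\in R\mid f\circ F=0\}$, $A_F=R/\operatorname{Ann}(F)$, and $F$ is its Macaulay dual generator. A graded Artinian $K$-algebra $A$ has the strong Lefschetz property if there is a linear form $\ell\in A_1$ such that for all $i\ge 0$, $k\ge 1$ the map $\times\ell^k:A_i\to A_{i+k}$ has maximal rank. *)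

(* Defs.v *)
From HB Require Import structures.
From mathcomp Require Import all_boot all_order all_algebra all_field.
From mathcomp Require Import mpoly.
Set Implicit Arguments. Unset Strict Implicit. Unset Printing Implicit Defensive.
Import Order.TTheory GRing.Theory.
Local Open Scope ring_scope.

(* The polynomial ring R = K[x_1..x_c] is {mpoly K[c]}.
   The divided power algebra K[X_1..X_c] is represented, as a K-vector
   space, by the same type {mpoly K[c]}: the element 'X_[b] stands for the
   divided monomial X^[b] = X_1^[b_1] ... X_c^[b_c].  Only its K-module
   structure and the contraction action are used. *)

Definition contract (K : fieldType) (c : nat) (f F : {mpoly K[c]}) : {mpoly K[c]} :=
  \sum_(a <- msupp f) \sum_(b <- msupp F)
     (f@_a * F@_b) *: (if (a <= b)%MM then 'X_[(b - a)%MM] else 0).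

Definition in_Ann (K : fieldType) (c : nat) (F f : {mpoly K[c]}) : Prop :=
  contract f F = 0.

(* A_F is a complete intersection: Ann(F) is generated by c elements
   (A_F is automatically Artinian). *)
Definition complete_intersection (K : fieldType) (c : nat) (F : {mpoly K[c]}) : Prop :=
  exists g : 'I_c -> {mpoly K[c]},
    forall f : {mpoly K[c]},
      in_Ann F f <-> exists h : 'I_c -> {mpoly K[c]}, f = \sum_(i < c) h i * g i.

(* A_F has codimension c: no nonzero linear form lies in Ann(F),
   i.e. dim_K (A_F)_1 = c. *)
Definition full_codim (K : fieldType) (c : nat) (F : {mpoly K[c]}) : Prop :=
  forall l : {mpoly K[c]}, l \is 1.-homog -> in_Ann F l -> l = 0.

(* Strong Lefschetz property of A_F = R/Ann(F) (graded, F homogeneous):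
   there is a linear form l such that for all i >= 0, k >= 1 the map
   x l^k : (A_F)_i -> (A_F)_{i+k} (with (A_F)_j = R_j / Ann(F)_j) is
   injective or surjective. *)
Definition SLP (K : fieldType) (c : nat) (F : {mpoly K[c]}) : Prop :=
  exists l : {mpoly K[c]}, l \is 1.-homog /\
    forall i k : nat, (0 < k)%N ->
      (forall f : {mpoly K[c]}, f \is i.-homog ->
          in_Ann F (l ^+ k * f) -> in_Ann F f)
      \/
      (forall g : {mpoly K[c]}, g \is (i + k)%N.-homog ->
          exists f : {mpoly K[c]}, f \is i.-homog /\ in_Ann F (g - l ^+ k * f)).

(* Main.v *)
Require Import Defs.
From HB Require Import structures.
From mathcomp Require Import all_boot all_order all_algebra all_field.
From mathcomp Require Import mpoly.
From mathcomp Require Import ring zify.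
Set Implicit Arguments. Unset Strict Implicit. Unset Printing Implicit Defensive.
Import Order.TTheory GRing.Theory.
Local Open Scope ring_scope.

Section Lin.
Variables (K : fieldType) (c : nat).
Local Notation mp := {mpoly K[c]}.
Local Notation mon := 'X_{1..c}.

Definition lin (g : mon -> mp) (p : mp) : mp := \sum_(m <- msupp p) p@_m *: g m.

Lemma lin_wide g p (s : seq mon) : uniq s -> {subset msupp p <= s} ->
  lin g p = \sum_(m <- s) p@_m *: g m.
Proof.
move=> us sub; rewrite /lin [RHS](bigID (mem (msupp p))) /=.
rewrite [X in _ = _ + X]big1 ?addr0; last first.
  by move=> m /memN_msupp_eq0 ->; rewrite scale0r.
rewrite -[RHS]big_filter; apply: perm_big; apply: uniq_perm; rewrite ?filter_uniq ?msupp_uniq //.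
move=> m; rewrite mem_filter /=; case mm: (m \in msupp p) => //=; by rewrite sub.
Qed.

Lemma lin_lin g a p q : lin g (a *: p + q) = a *: lin g p + lin g q.
Proof.
set s := undup (msupp p ++ msupp q ++ msupp (a *: p + q)).
have us : uniq s by apply: undup_uniq.
rewrite !(@lin_wide g _ s) //; last 3 first.
- by move=> m mm; rewrite mem_undup !mem_cat mm ?orbT.
- by move=> m mm; rewrite mem_undup !mem_cat mm ?orbT.
- by move=> m mm; rewrite mem_undup !mem_cat mm ?orbT.
rewrite scaler_sumr -big_split /=; apply: eq_bigr => m _.
by rewrite mcoeffD mcoeffZ scalerDl scalerA.
Qed.

Lemma lin0 g : lin g 0 = 0.
Proof. by rewrite /lin big1 // => m _; rewrite mcoeff0 scale0r. Qed.

Lemma linD g p q : lin g (p + q) = lin g p + lin g q.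
Proof. by have := lin_lin g 1 p q; rewrite !scale1r. Qed.

Lemma linZ g a p : lin g (a *: p) = a *: lin g p.
Proof. by have := lin_lin g a p 0; rewrite !addr0 lin0 addr0. Qed.

Lemma linX g m : lin g 'X_[m] = g m.
Proof. by rewrite /lin msuppX big_seq1 mcoeffX eqxx scale1r. Qed.

Definition islin (phi : mp -> mp) := forall a p q, phi (a *: p + q) = a *: phi p + phi q.

Lemma islin0 phi : islin phi -> phi 0 = 0.
Proof.
move=> h; have E := h 1 0 0; rewrite !scale1r addr0 in E.
by apply: (@addrI _ (phi 0)); rewrite addr0 -E.
Qed.

Lemma islinD phi : islin phi -> forall p q, phi (p + q) = phi p + phi q.
Proof. by move=> h p q; have := h 1 p q; rewrite !scale1r. Qed.

Lemma islinZ phi : islin phi -> forall a p, phi (a *: p) = a *: phi p.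
Proof. by move=> h a p; have := h a p 0; rewrite !addr0 (islin0 h) addr0. Qed.

Lemma islinN phi : islin phi -> forall p, phi (- p) = - phi p.
Proof. by move=> h p; rewrite -scaleN1r islinZ // scaleN1r. Qed.

Lemma islinB phi : islin phi -> forall p q, phi (p - q) = phi p - phi q.
Proof. by move=> h p q; rewrite islinD // islinN. Qed.

Lemma islin_sum phi (I : Type) (r : seq I) (F : I -> mp) : islin phi ->
  phi (\sum_(i <- r) F i) = \sum_(i <- r) phi (F i).
Proof.
move=> h; elim: r => [|x r ih]; first by rewrite !big_nil islin0.
by rewrite !big_cons islinD // ih.
Qed.

Lemma lin_islin g : islin (lin g).
Proof. exact: lin_lin. Qed.

Lemma islin_ext phi psi : islin phi -> islin psi ->
  (forall m, phi 'X_[m] = psi 'X_[m]) -> forall p, phi p = psi p.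
Proof.
move=> hp hq h p; rewrite [p]mpolyE !islin_sum //; apply: eq_bigr => m _.
by rewrite !islinZ // h.
Qed.

Lemma islin_lin phi : islin phi -> forall p, phi p = lin (fun m => phi 'X_[m]) p.
Proof.
move=> h; apply: islin_ext => //; first exact: lin_islin.
by move=> m; rewrite linX.
Qed.

Lemma lin_coef g p x : (lin g p)@_x = \sum_(m <- msupp p) p@_m * (g m)@_x.
Proof. by rewrite /lin (big_morph (mcoeff x) (@mcoeffD _ _ x) (@mcoeff0 _ _ x)); apply: eq_bigr => m _; rewrite mcoeffZ. Qed.

End Lin.

Section Contract.
Variables (K : fieldType) (c : nat).
Local Notation mp := {mpoly K[c]}.
Local Notation mon := 'X_{1..c}.

Definition cmon (a b : mon) : mp := if (a <= b)%MM then 'X_[(b - a)%MM] else 0.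
Definition cm (a : mon) := lin (cmon a).

Lemma contractE (f F : mp) : contract f F = lin (fun a => cm a F) f.
Proof.
rewrite /contract /lin; apply: eq_bigr => a _; rewrite /cm /lin scaler_sumr.
by apply: eq_bigr => b _; rewrite scalerA.
Qed.

Lemma contract_linl (F : mp) : islin (fun f => contract f F).
Proof. by move=> a p q /=; rewrite !contractE lin_lin. Qed.

Lemma contract_linr (f : mp) : islin (contract f).
Proof.
move=> a p q; rewrite !contractE /lin scaler_sumr -big_split /=.
by apply: eq_bigr => m _; rewrite /cm lin_lin scalerDr !scalerA mulrC.
Qed.

Lemma contract0l (F : mp) : contract 0 F = 0.
Proof. exact: (islin0 (contract_linl F)). Qed.

Lemma contract0r (f : mp) : contract f 0 = 0.
Proof. exact: (islin0 (contract_linr f)). Qed.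

Lemma contractXX a b : contract 'X_[a] 'X_[b] = cmon a b :> mp.
Proof. by rewrite contractE linX /cm linX. Qed.

Lemma lem_addP (a a' b : mon) :
  (a + a' <= b)%MM = (a' <= b)%MM && (a <= b - a')%MM.
Proof.
apply/idP/idP.
  move/mnm_lepP => h; apply/andP; split; apply/mnm_lepP => i; have := h i;
  rewrite mnmDE ?mnmBE; lia.
case/andP => /mnm_lepP h1 /mnm_lepP h2; apply/mnm_lepP => i.
have := h1 i; have := h2 i; rewrite mnmDE mnmBE; lia.
Qed.

Lemma contractM (f g F : mp) : contract (f * g) F = contract f (contract g F).
Proof.
move: f; apply: islin_ext.
- by move=> a p q /=; rewrite mulrDl -scalerAl contract_linl.
- exact: contract_linl.
move=> a; move: g; apply: islin_ext.
- by move=> x p q /=; rewrite mulrDr -scalerAr contract_linl.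
- by move=> x p q /=; rewrite contract_linl contract_linr.
move=> a'; move: F; apply: islin_ext.
- exact: contract_linr.
- by move=> x p q /=; rewrite contract_linr contract_linr.
move=> b; rewrite -mpolyXD !contractXX /cmon lem_addP.
case/boolP: ((a' <= b)%MM) => h1 /=; last by rewrite contract0r.
rewrite contractXX /cmon; case: ifP => // _.
by rewrite submDA addmC.
Qed.

Lemma contract1 (F : mp) : contract 1 F = F.
Proof.
move: F; apply: islin_ext; first exact: contract_linr.
  by move=> a p q.
move=> b; rewrite -mpolyX0 contractXX /cmon.
have -> : (0 <= b)%MM by apply/mnm_lepP => i; rewrite mnm0E.
by rewrite subm0.
Qed.


Lemma cm_coef (a : mon) (P : mp) (x : mon) : (cm a P)@_x = P@_(x + a).
Proof.
rewrite /cm lin_coef.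
have E : forall m, P@_m * (cmon a m)@_x = if m == (x + a)%MM then P@_m else 0.
  move=> m; rewrite /cmon; case: ifP => h.
    rewrite mcoeffX; case: eqP => [<-|ne]; first by rewrite submK // eqxx mulr1.
    case: eqP => [em|]; last by rewrite mulr0.
    by exfalso; apply: ne; rewrite em addmK.
  rewrite mcoeff0 mulr0; case: eqP => // em; exfalso.
  by move: h; rewrite em lem_addl.
rewrite (eq_bigr _ (fun m _ => E m)).
case: (boolP ((x + a)%MM \in msupp P)) => hin.
  rewrite (bigD1_seq (x + a)%MM) ?msupp_uniq //= eqxx big1 ?addr0 //.
  by move=> m /negbTE ->.
rewrite (memN_msupp_eq0 hin) big1_seq // => m /= mm.
by case: eqP => // em; move: hin; rewrite -em mm.
Qed.

End Contract.

Section Homog.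
Variables (K : fieldType) (c : nat).
Local Notation mp := {mpoly K[c]}.
Local Notation mon := 'X_{1..c}.

Lemma sum_kron (p : mp) (y : mon) (h : mon -> K) :
  (forall m, h m = if m == y then p@_m else 0) ->
  \sum_(m <- msupp p) h m = p@_y.
Proof.
move=> E; rewrite (eq_bigr _ (fun m _ => E m)).
case: (boolP (y \in msupp p)) => hin.
  rewrite (bigD1_seq y) ?msupp_uniq //= eqxx big1 ?addr0 //.
  by move=> m /negbTE ->.
rewrite (memN_msupp_eq0 hin) big1_seq // => m /= mm.
by case: eqP => // em; move: hin; rewrite -em mm.
Qed.

Lemma mdeg_le (a b : mon) : (a <= b)%MM -> (mdeg a <= mdeg b)%N.
Proof. by move=> h; rewrite -(submK h) mdegD leq_addl. Qed.

Lemma mdegB (a b : mon) : (a <= b)%MM -> mdeg (b - a)%MM = (mdeg b - mdeg a)%N.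
Proof. by move=> h; rewrite -{2}(submK h) mdegD addnK. Qed.

Lemma homog_sum (I : Type) (r : seq I) (P : pred I) (F : I -> mp) d :
  (forall i, P i -> F i \is d.-homog) -> \sum_(i <- r | P i) F i \is d.-homog.
Proof.
move=> h; apply: (big_ind (fun x : mp => x \is d.-homog)) => //.
- exact: dhomog0.
- by move=> x y hx hy; apply: dhomogD.
Qed.

Lemma lin_homog (g : mon -> mp) (p : mp) d :
  (forall m, m \in msupp p -> g m \is d.-homog) -> lin g p \is d.-homog.
Proof.
move=> h; rewrite /lin big_seq_cond; apply: homog_sum => m /andP [mm _].
by apply: dhomogZ; apply: h.
Qed.

Lemma contract_homog (f F : mp) i j :
  f \is i.-homog -> F \is j.-homog -> contract f F \is (j - i)%N.-homog.
Proof.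
move=> /dhomogP hf /dhomogP hF; rewrite contractE; apply: lin_homog => a ma.
apply: lin_homog => b mb; rewrite /cmon; case: ifP => h; last exact: dhomog0.
rewrite dhomogX; change (mdeg (b - a)%MM == (j - i)%N); rewrite mdegB //.
have ha : mdeg a = i by exact: hf.
have hb : mdeg b = j by exact: hF.
by rewrite ha hb.
Qed.

Lemma contract_homog0 (f F : mp) i j :
  f \is i.-homog -> F \is j.-homog -> (j < i)%N -> contract f F = 0.
Proof.
move=> /dhomogP hf /dhomogP hF lt; rewrite contractE /lin big1_seq // => a /= ma.
rewrite /cm /lin big1_seq ?scaler0 // => b /= mb.
rewrite /cmon; case: ifP => h; last by rewrite scaler0.
by move: (mdeg_le h); rewrite hf // hF // leqNgt lt.
Qed.

Lemma cX_coef (g : mp) (b mu : mon) : (mu <= b)%MM ->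
  (contract g 'X_[b])@_(b - mu) = g@_mu.
Proof.
move=> hmu; rewrite contractE lin_coef; apply: sum_kron => a.
rewrite /cm linX /cmon; case: ifP => h.
  rewrite mcoeffX; case: eqP => [e|ne].
    have -> : a = mu.
      apply/mnmP => i; move/mnmP: e => /(_ i); rewrite !mnmBE.
      move/mnm_lepP: h => /(_ i); move/mnm_lepP: hmu => /(_ i); lia.
    by rewrite eqxx mulr1.
  case: eqP => [ea|]; last by rewrite mulr0.
  by exfalso; apply: ne; rewrite ea.
rewrite mcoeff0 mulr0; case: eqP => // ea; by move: h; rewrite ea hmu.
Qed.

End Homog.

Section Change.
Variables (K : fieldType) (c : nat) (hc : (1 < c)%N) (t : K).
Local Notation mp := {mpoly K[c]}.
Local Notation mon := 'X_{1..c}.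
Local Notation cmn := (@cmon K c).

Definition i0 : 'I_c := Ordinal (ltnW hc).
Definition i1 : 'I_c := Ordinal hc.

Lemma i01 : (i0 == i1) = false.
Proof. by []. Qed.
Lemma i10 : (i1 == i0) = false.
Proof. by []. Qed.

Definition sh (b : mon) (q : nat) : mon := (b - U_(i0) *+ q + U_(i1) *+ q)%MM.

Lemma shE b q i : sh b q i = (b i - (i0 == i) * q + (i1 == i) * q)%N.
Proof. by rewrite /sh mnmDE mnmBE !mulmnE !mnm1E mulnC [X in (_ + X)%N]mulnC. Qed.

Lemma sh0 b : sh b 0 = b.
Proof. by apply/mnmP => i; rewrite shE !muln0 subn0 addn0. Qed.

Definition Tm (b : mon) : mp :=
  \sum_(0 <= q < (b i0).+1) (t ^+ q * ('C(b i1 + q, q))%:R) *: 'X_[sh b q].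

Definition T := lin Tm.

Lemma T_lin : islin T.
Proof. exact: lin_islin. Qed.

Lemma contract_sum (f : mp) (I : Type) (r : seq I) (F : I -> mp) :
  contract f (\sum_(i <- r) F i) = \sum_(i <- r) contract f (F i).
Proof. exact: islin_sum (contract_linr f). Qed.

Lemma lep1 (i : 'I_c) (b : mon) : (U_(i) <= b)%MM = (b i != 0%N).
Proof. exact: lep1mP. Qed.

Lemma cX_Tm_gen (i : 'I_c) b :
  contract 'X_i (Tm b) =
  \sum_(0 <= q < (b i0).+1) (t ^+ q * ('C(b i1 + q, q))%:R) *:
      (if (sh b q i != 0)%N then 'X_[sh b q - U_(i)] else 0).
Proof.
rewrite /Tm contract_sum; apply: eq_bigr => q _.
by rewrite (islinZ (contract_linr _)) contractXX /cmon lep1.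
Qed.

Lemma I0 b : contract 'X_i0 (Tm b) = T (cmn U_(i0)%MM b).
Proof.
rewrite cX_Tm_gen /cmn /cmon lep1.
case E: (b i0) => [|k] /=.
  by rewrite big_nat1 shE E eqxx /= /T lin0 scaler0.
rewrite /T linX /Tm big_nat_recr //= [sh b k.+1 i0]shE E eqxx ?i01 ?i10 /= mul1n addn0 subnn eqxx.
rewrite scaler0 addr0.
have -> : (b - U_(i0))%MM i0 = k by rewrite mnmBE mnm1E eqxx E subn1.
apply: eq_big_nat => q /andP [_ hq].
rewrite shE E eqxx ?i01 ?i10 /= mul1n addn0.
have -> : (k.+1 - q != 0)%N = true by apply/eqP; lia.
have -> : (b - U_(i0))%MM i1 = b i1 by rewrite mnmBE mnm1E ?i01 ?i10 subn0.
congr (_ *: 'X_[_]); apply/mnmP => j; rewrite shE !mnmBE shE !mnm1E.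
case: (eqVneq i0 j) => [<-|n0]; first by rewrite ?i01 ?i10 /= E; lia.
by rewrite /=; lia.
Qed.

Lemma I3 (i : 'I_c) b : i != i0 -> i != i1 -> contract 'X_i (Tm b) = T (cmn U_(i)%MM b).
Proof.
move=> n0 n1; rewrite cX_Tm_gen /cmn /cmon lep1.
have hs : forall q, sh b q i = b i.
  move=> q; rewrite shE.
  have -> : (i0 == i) = false by rewrite eq_sym (negbTE n0).
  have -> : (i1 == i) = false by rewrite eq_sym (negbTE n1).
  by rewrite /= !mul0n subn0 addn0.
case: (eqVneq (b i) 0%N) => E /=.
  by rewrite big1 /T ?lin0 // => q _; rewrite hs E scaler0.
rewrite /T linX /Tm.
have -> : (b - U_(i))%MM i0 = b i0 by rewrite mnmBE mnm1E (negbTE n0) subn0.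
apply: eq_big_nat => q _; rewrite hs E.
have -> : (b - U_(i))%MM i1 = b i1 by rewrite mnmBE mnm1E (negbTE n1) subn0.
congr (_ *: 'X_[_]); apply/mnmP => j; rewrite shE !mnmBE shE !mnm1E.
case: (eqVneq i j) => [<-|nj].
  by rewrite eq_sym (negbTE n0) eq_sym (negbTE n1) /=; lia.
by rewrite /=; lia.
Qed.


Lemma I2 b : contract 'X_i1 (Tm b) = t *: T (cmn U_(i0)%MM b) + T (cmn U_(i1)%MM b).
Proof.
rewrite cX_Tm_gen /cmn /cmon !lep1 big_nat_recl //.
have hs : forall q, sh b q i1 = (b i1 + q)%N.
  by move=> q; rewrite shE i01 eqxx /= mul0n subn0 mul1n.
rewrite (eq_big_nat _ _ (F2 := fun q => t *: ((t ^+ q * ('C(b i1 + q, q))%:R) *: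
     'X_[sh (b - U_(i0)) q]) + (t ^+ q.+1 * ('C(b i1 + q, q.+1))%:R) *: 'X_[sh b q.+1 - U_(i1)])); last first.
  move=> q _; rewrite hs addnS /= binS natrD (addrC ('C(_, q.+1))%:R) mulrDr scalerDl exprS -mulrA scalerA.
  congr (_ *: 'X_[_] + _); apply/mnmP => j; rewrite shE !mnmBE shE !mnm1E.
  case: (eqVneq i0 j) => [<-|n0]; first by rewrite ?i01 ?i10 /=; lia.
  case: (eqVneq i1 j) => [<-|n1]; first by rewrite ?i01 ?i10 /=; lia.
  by rewrite /=; lia.
rewrite big_split /= -scaler_sumr addrCA; congr (_ *: _ + _).
  case: (eqVneq (b i0) 0%N) => E0 /=; first by rewrite /T lin0 E0 big_geq.
  rewrite /T linX /Tm.
  have -> : (b - U_(i0))%MM i0 = (b i0).-1 by rewrite mnmBE mnm1E eqxx subn1.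
  have -> : ((b i0).-1.+1 = b i0)%N by lia.
  apply: eq_big_nat => q _.
  by have -> : (b - U_(i0))%MM i1 = b i1 by rewrite mnmBE mnm1E ?i01 ?i10 subn0.
rewrite sh0 addn0 bin0 mulr1n expr0 mul1r scale1r.
case: (eqVneq (b i1) 0%N) => E1 /=.
  by rewrite /T lin0 add0r big1_seq // => q _; rewrite E1 add0n bin_small // mulr0 scale0r.
rewrite /T linX /Tm big_nat_recl // sh0 addn0 bin0 mulr1n expr0 mul1r scale1r; congr (_ + _).
have -> : (b - U_(i1))%MM i0 = b i0 by rewrite mnmBE mnm1E ?i01 ?i10 subn0.
apply: eq_big_nat => q _.
have -> : (b - U_(i1))%MM i1 = (b i1).-1 by rewrite mnmBE mnm1E eqxx subn1.
have -> : ((b i1).-1 + q.+1 = b i1 + q)%N by lia.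
congr (_ *: 'X_[_]); apply/mnmP => j; rewrite shE !mnmBE shE !mnm1E.
case: (eqVneq i0 j) => [<-|n0]; first by rewrite ?i01 ?i10 /=; lia.
case: (eqVneq i1 j) => [<-|n1]; first by rewrite ?i01 ?i10 /=; lia.
by rewrite /=; lia.
Qed.

Definition sigX (i : 'I_c) : mp := if i == i1 then t *: 'X_i0 + 'X_i1 else 'X_i.
Definition sigiX (i : 'I_c) : mp := if i == i1 then 'X_i1 - t *: 'X_i0 else 'X_i.
Definition sig (f : mp) : mp := f \mPo [tuple sigX i | i < c].
Definition sigi (f : mp) : mp := f \mPo [tuple sigiX i | i < c].

Lemma sig_X i : sig 'X_i = sigX i.
Proof. by rewrite /sig comp_mpolyXU -tnth_nth tnth_mktuple. Qed.
Lemma sigi_X i : sigi 'X_i = sigiX i.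
Proof. by rewrite /sigi comp_mpolyXU -tnth_nth tnth_mktuple. Qed.

Lemma sig_islin : islin sig.
Proof. by move=> a p q; rewrite /sig comp_mpolyD comp_mpolyZ. Qed.
Lemma sigi_islin : islin sigi.
Proof. by move=> a p q; rewrite /sigi comp_mpolyD comp_mpolyZ. Qed.

Lemma sigM f g : sig (f * g) = sig f * sig g.
Proof. exact: rmorphM. Qed.
Lemma sigiM f g : sigi (f * g) = sigi f * sigi g.
Proof. exact: rmorphM. Qed.
Lemma sig1 : sig 1 = 1.
Proof. exact: comp_mpoly1. Qed.
Lemma sigi1 : sigi 1 = 1.
Proof. exact: comp_mpoly1. Qed.

Lemma mono_ind (Q : mp -> Prop) : Q 1 -> (forall i, Q 'X_i) ->
  (forall f g, Q f -> Q g -> Q (f * g)) -> forall m, Q 'X_[m].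
Proof.
move=> h1 hX hM m; rewrite mpolyXE_id; apply: big_ind => //.
move=> i _; elim: (m i) => [|k ih]; first by rewrite expr0.
by rewrite exprS; apply: hM.
Qed.

Lemma sig_sigi f : sig (sigi f) = f.
Proof.
move: f; apply: islin_ext.
- by move=> a p q; rewrite sigi_islin sig_islin.
- by move=> a p q.
apply: (mono_ind (Q := fun f => sig (sigi f) = f)).
- by rewrite sigi1 sig1.
- move=> i; rewrite sigi_X /sigiX; case: eqP => [->|ne]; last by rewrite sig_X /sigX; case: eqP.
  rewrite (islinB sig_islin) (islinZ sig_islin) !sig_X /sigX eqxx i01.
  by rewrite addrC addKr.
- by move=> f g hf hg; rewrite sigiM sigM hf hg.
Qed.

Lemma sigi_sig f : sigi (sig f) = f.
Proof.
move: f; apply: islin_ext.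
- by move=> a p q; rewrite sig_islin sigi_islin.
- by move=> a p q.
apply: (mono_ind (Q := fun f => sigi (sig f) = f)).
- by rewrite sig1 sigi1.
- move=> i; rewrite sig_X /sigX; case: eqP => [->|ne]; last by rewrite sigi_X /sigiX; case: eqP.
  rewrite (islinD sigi_islin) (islinZ sigi_islin) !sigi_X /sigiX eqxx i01.
  by rewrite addrC subrK.
- by move=> f g hf hg; rewrite sigM sigiM hf hg.
Qed.

Lemma homog_comp (lq : c.-tuple mp) (f : mp) d :
  (forall i, tnth lq i \is 1.-homog) -> f \is d.-homog -> f \mPo lq \is d.-homog.
Proof.
move=> hl /dhomogP hf; rewrite comp_mpolyEX big_seq; apply: homog_sum => m mm.
apply: dhomogZ; rewrite comp_mpolyX.
have <- : mdeg m = d by exact: hf.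
rewrite mdegE; apply: (big_ind2 (fun (p : mp) (k : nat) => p \is k.-homog)).
- exact: dhomog1.
- by move=> x1 x2 y1 y2 h1 h2; apply: dhomogM.
move=> i _; have := dhomogMn (m i) (hl i); by rewrite mul1n.
Qed.

Lemma homogX1 (i : 'I_c) : ('X_i : mp) \is 1.-homog.
Proof. by rewrite dhomogX; apply/eqP; exact: mdeg1. Qed.

Lemma sig_homog f d : f \is d.-homog -> sig f \is d.-homog.
Proof.
apply: homog_comp => i; rewrite tnth_mktuple /sigX; case: eqP => _; last exact: homogX1.
by apply: dhomogD; [apply: dhomogZ|]; apply: homogX1.
Qed.

Lemma sigi_homog f d : f \is d.-homog -> sigi f \is d.-homog.
Proof.
apply: homog_comp => i; rewrite tnth_mktuple /sigiX; case: eqP => _; last exact: homogX1.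
rewrite -scaleNr; apply: dhomogD; [apply: homogX1 | apply: dhomogZ; apply: homogX1].
Qed.

Lemma intertwX (i : 'I_c) P : contract 'X_i (T P) = T (contract (sig 'X_i) P).
Proof.
move: P; apply: islin_ext.
- by move=> a p q; rewrite T_lin contract_linr.
- by move=> a p q; rewrite contract_linr T_lin.
move=> b; rewrite /T linX -/T sig_X /sigX.
case: (eqVneq i i1) => [->|n1].
  by rewrite I2 contract_linl !contractXX T_lin.
rewrite contractXX.
case: (eqVneq i i0) => [->|n0]; first exact: I0.
exact: I3.
Qed.

Lemma intertw f P : contract f (T P) = T (contract (sig f) P).
Proof.
move: f; apply: islin_ext.
- by move=> a p q /=; rewrite contract_linl.
- by move=> a p q /=; rewrite sig_islin contract_linl T_lin.
move=> m; move: m P; apply: (mono_ind (Q := fun f => forall P, contract f (T P) = T (contract (sig f) P))).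
- by move=> P; rewrite sig1 !contract1.
- exact: intertwX.
by move=> f g hf hg P; rewrite contractM hg hf sigM contractM.
Qed.

Lemma mdeg_sh (b : mon) q : (q <= b i0)%N -> mdeg (sh b q) = mdeg b.
Proof.
move=> hq.
have hle : (U_(i0) *+ q <= b)%MM.
  by apply/mnm_lepP => j; rewrite mulmnE mnm1E; case: eqP => [<-|_]; rewrite ?mul1n ?mul0n.
rewrite /sh mdegD mdegB // !mdegMn !mdeg1 !mul1n subnK //.
by have := mdeg_le hle; rewrite mdegMn mdeg1 mul1n.
Qed.

Lemma Tm_homog b : Tm b \is (mdeg b).-homog.
Proof.
rewrite /Tm big_nat_cond; apply: homog_sum => q /andP [/andP [_ hq] _].
by apply: dhomogZ; rewrite dhomogX; change (mdeg (sh b q) == mdeg b); rewrite mdeg_sh.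
Qed.

Lemma T_homog P d : P \is d.-homog -> T P \is d.-homog.
Proof.
move=> /dhomogP hP; apply: lin_homog => b mb.
have <- : mdeg b = d by exact: hP.
exact: Tm_homog.
Qed.

Lemma Tcoef0 Q : (T Q)@_0%MM = Q@_0%MM.
Proof.
rewrite /T lin_coef; apply: sum_kron => b.
rewrite /Tm (big_morph (mcoeff 0%MM) (@mcoeffD _ _ 0%MM) (@mcoeff0 _ _ 0%MM)).
case: (eqVneq b 0%MM) => [->|nb].
  rewrite mnm0E big_nat1 mcoeffZ mcoeffX sh0 eqxx mnm0E add0n bin0 mulr1n expr0.
  by rewrite !mulr1.
rewrite big1_seq ?mulr0 // => q _; rewrite mcoeffZ mcoeffX.
case: eqP => [e|]; last by rewrite mulr0.
exfalso; case: q e => [|q] e; first by move: nb; rewrite -e sh0 eqxx.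
by move/mnmP: e => /(_ i1); rewrite shE mnm0E i01 eqxx /=; lia.
Qed.

Lemma Tinj P : T P = 0 -> P = 0.
Proof.
move=> h; apply/mpolyP => a; rewrite mcoeff0.
have -> : P@_a = (contract 'X_[a] P)@_0%MM.
  by rewrite contractE linX cm_coef add0m.
rewrite -(sig_sigi 'X_[a]) -Tcoef0 -intertw h contract0r mcoeff0 //.
Qed.

End Change.

Section Box.
Variables (K : fieldType) (c : nat) (nm : 'X_{1..c}).
Local Notation mp := {mpoly K[c]}.
Local Notation mon := 'X_{1..c}.
Local Notation cmn := (@cmon K c).

Definition box (p : mp) := all (fun b => (b <= nm)%MM) (msupp p).

Lemma box0 : box 0.
Proof. by apply/allP => b; rewrite mcoeff_msupp mcoeff0 eqxx. Qed.

Lemma boxL a p q : box p -> box q -> box (a *: p + q).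
Proof.
move=> /allP hp /allP hq; apply/allP => b /msuppD_le; rewrite mem_cat.
by case/orP => [/msuppZ_le/hp|/hq].
Qed.

Lemma boxD p q : box p -> box q -> box (p + q).
Proof. by move=> hp hq; rewrite -[p]scale1r; apply: boxL. Qed.
Lemma boxZ a p : box p -> box (a *: p).
Proof. by move=> hp; rewrite -[a *: p]addr0; apply: boxL => //; exact: box0. Qed.

Lemma box_sum (I : Type) (r : seq I) (P : pred I) (F : I -> mp) :
  (forall i, P i -> box (F i)) -> box (\sum_(i <- r | P i) F i).
Proof.
move=> h; apply: (big_ind box) => //; [exact: box0 | exact: boxD].
Qed.

Lemma boxX b : (b <= nm)%MM -> box 'X_[b].
Proof. by move=> h; rewrite /box msuppX /= h. Qed.

Lemma box_lin g p : (forall b, b \in msupp p -> box (g b)) -> box (lin g p).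
Proof.
by move=> h; rewrite /lin big_seq_cond; apply: box_sum => b /andP [hb _]; apply/boxZ/h.
Qed.

Lemma box_contract f P : box P -> box (contract f P).
Proof.
move=> /allP hP; rewrite contractE; apply: box_lin => a _; apply: box_lin => b hb.
rewrite /cmon; case: ifP => _; last exact: box0.
by apply: boxX; apply: lepm_trans (hP _ hb); apply: lem_subr.
Qed.

Lemma box_top (p : mp) j : box p -> p \is j.-homog -> (mdeg nm < j)%N -> p = 0.
Proof.
move=> /allP hb /dhomogP hh lt; apply: msuppnil0.
case E: (msupp p) => [|b r] //; have hb' : b \in msupp p by rewrite E mem_head.
have := mdeg_le (hb _ hb'); have -> : mdeg b = j by exact: hh.
by rewrite leqNgt lt.
Qed.

Definition cf (b : mon) (i : 'I_c) : K := ((b i).+1 * (nm i - b i))%:R.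

Definition Phi := lin (fun b => \sum_(i < c) cf b i *: 'X_[b + U_(i)]).

Lemma Phi_lin : islin Phi.
Proof. exact: lin_islin. Qed.

Lemma box_Phi p : box p -> box (Phi p).
Proof.
move=> /allP hp; apply: box_lin => b hb; apply: box_sum => i _.
have hbn := hp _ hb; rewrite /cf.
case: (ltnP (b i) (nm i)) => h.
  apply/boxZ/boxX/mnm_lepP => j; rewrite mnmDE mnm1E.
  case: eqP => [<-|_]; first by rewrite addn1.
  by rewrite addn0; move/mnm_lepP: hbn.
have -> : (nm i - b i = 0)%N by apply/eqP; rewrite subn_eq0.
by rewrite muln0 scale0r; exact: box0.
Qed.

Lemma homog_Phi p j : p \is j.-homog -> Phi p \is j.+1.-homog.
Proof.
move=> /dhomogP hp; apply: lin_homog => b hb; apply: homog_sum => i _.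
apply: dhomogZ; rewrite dhomogX; change (mdeg (b + U_(i))%MM == j.+1).
rewrite mdegD mdeg1; have -> : mdeg b = j by exact: hp.
by rewrite addn1.
Qed.

Definition lsum : mp := \sum_(i < c) 'X_i.

Lemma lsum_homog : lsum \is 1.-homog.
Proof.
rewrite /lsum; apply: homog_sum => i _; rewrite dhomogX; apply/eqP; exact: mdeg1.
Qed.

Definition ee := contract lsum.

Lemma ee_lin : islin ee.
Proof. exact: contract_linr. Qed.

Lemma eeX b : ee 'X_[b] = \sum_(k < c) cmn U_(k)%MM b.
Proof.
rewrite /ee /lsum (islin_sum _ _ (contract_linl _)); apply: eq_bigr => k _.
by rewrite contractXX.
Qed.

Lemma natr_swap (A B C D : nat) : (A + C = D + B)%N -> (A%:R - B%:R : K) = D%:R - C%:R.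
Proof.
move=> E; have E' : (A%:R + C%:R : K) = D%:R + B%:R by rewrite -!natrD E.
have -> : (A%:R : K) = D%:R + B%:R - C%:R by rewrite -E' addrK.
ring.
Qed.

Lemma pair_rel (b : mon) (i k : 'I_c) : (b <= nm)%MM ->
  cf b i *: cmn U_(k)%MM (b + U_(i)) -
  (if (U_(k) <= b)%MM then cf (b - U_(k)) i *: 'X_[b - U_(k) + U_(i)] else 0) =
  if i == k then ((nm i)%:R - (2 * b i)%:R) *: 'X_[b] else 0.
Proof.
move=> hb; have hbi : (b i <= nm i)%N by move/mnm_lepP: hb.
rewrite /cmon !lep1mP mnmDE mnm1E.
case: (eqVneq i k) => [<-|ne].
  rewrite addn1 /= addmK.
  case: (eqVneq (b i) 0%N) => E /=.
    rewrite subr0 /cf E subn0 mul1n; congr (_ *: _); by rewrite muln0 subr0.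
  have hle : (U_(i) <= b)%MM by rewrite lep1mP.
  rewrite submK // -scalerBl; congr (_ *: _); rewrite /cf mnmBE mnm1E eqxx.
  apply: natr_swap; move: hbi E; set x := b i; set y := nm i => hbi E; nia.
rewrite /= addn0; case: (eqVneq (b k) 0%N) => E /=; first by rewrite scaler0 subrr.
rewrite /cf mnmBE mnm1E.
have -> : (k == i) = false by rewrite eq_sym (negbTE ne).
rewrite subn0; apply/eqP; rewrite subr_eq0; apply/eqP; congr (_ *: 'X_[_]).
apply/mnmP => j; rewrite !(mnmBE, mnmDE, mnm1E).
case: (eqVneq k j) => [ekj|nk]; case: (eqVneq i j) => [eij|nj] /=; subst; try lia.
Qed.

Lemma relX (b : mon) : (b <= nm)%MM ->
  ee (Phi 'X_[b]) - Phi (ee 'X_[b]) = ((mdeg nm)%:R - (2 * mdeg b)%:R) *: 'X_[b].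
Proof.
move=> hb.
have E1 : ee (Phi 'X_[b]) = \sum_(i < c) \sum_(k < c) cf b i *: cmn U_(k)%MM (b + U_(i)).
  rewrite /Phi linX (islin_sum _ _ ee_lin); apply: eq_bigr => i _.
  by rewrite (islinZ ee_lin) eeX scaler_sumr.
have E2 : Phi (ee 'X_[b]) = \sum_(i < c) \sum_(k < c)
    (if (U_(k) <= b)%MM then cf (b - U_(k)) i *: 'X_[b - U_(k) + U_(i)] else 0).
  rewrite eeX (islin_sum _ _ Phi_lin) [RHS]exchange_big /=; apply: eq_bigr => k _.
  rewrite /cmon; case: ifP => h; first by rewrite /Phi linX.
  by rewrite /Phi lin0 big1.
rewrite E1 E2 -sumrB.
rewrite (eq_bigr (fun i => ((nm i)%:R - (2 * b i)%:R) *: 'X_[b])); last first.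
  move=> i _; rewrite -sumrB (bigD1 i) //= pair_rel // eqxx big1 ?addr0 //.
  by move=> k nk; rewrite pair_rel // eq_sym (negbTE nk).
rewrite -scaler_suml sumrB -!natr_sum mdegE; congr ((_ - _) *: _).
  by rewrite mdegE -big_distrr.
Qed.

Lemma rel (p : mp) j : box p -> p \is j.-homog ->
  ee (Phi p) - Phi (ee p) = ((mdeg nm)%:R - (2 * j)%:R) *: p.
Proof.
move=> /allP hb /dhomogP hh.
have hl : islin (fun p => ee (Phi p) - Phi (ee p)).
  by move=> a u v; rewrite Phi_lin ee_lin ee_lin Phi_lin scalerBr addrACA opprD.
rewrite (islin_lin hl) {2}[p]mpolyE /lin scaler_sumr; apply: eq_big_seq => b mb.
rewrite relX ?hb //; have -> : mdeg b = j by exact: hh.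
by rewrite !scalerA mulrC.
Qed.

End Box.

Section SL2.
Variables (K : fieldType) (V : lmodType K) (d : nat).
Variables (W : nat -> V -> Prop) (e phi : V -> V).
Hypothesis W0 : forall j, W j 0.
Hypothesis WD : forall j u v, W j u -> W j v -> W j (u + v).
Hypothesis WZ : forall j a u, W j u -> W j (a *: u).
Hypothesis elin : forall a u v, e (a *: u + v) = a *: e u + e v.
Hypothesis plin : forall a u v, phi (a *: u + v) = a *: phi u + phi v.
Hypothesis eW : forall j v, W j v -> W j.-1 (e v).
Hypothesis e0 : forall v, W 0 v -> e v = 0.
Hypothesis pW : forall j v, W j v -> W j.+1 (phi v).
Hypothesis top : forall j v, (d < j)%N -> W j v -> v = 0.
Hypothesis rel : forall j v, W j v -> e (phi v) - phi (e v) = (d%:R - (2 * j)%:R) *: v.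
Hypothesis ch0 : forall n, (n.+1)%:R != 0 :> K.

Lemma gen0 (f : V -> V) : (forall a u v, f (a *: u + v) = a *: f u + f v) -> f 0 = 0.
Proof.
move=> h; have E := h 1 0 0; rewrite !scale1r addr0 in E.
by apply: (@addrI _ (f 0)); rewrite addr0 -E.
Qed.
Lemma genD (f : V -> V) : (forall a u v, f (a *: u + v) = a *: f u + f v) ->
  forall u v, f (u + v) = f u + f v.
Proof. by move=> h u v; have := h 1 u v; rewrite !scale1r. Qed.
Lemma genZ (f : V -> V) : (forall a u v, f (a *: u + v) = a *: f u + f v) ->
  forall a u, f (a *: u) = a *: f u.
Proof. by move=> h a u; have := h a u 0; rewrite !addr0 (gen0 h) addr0. Qed.

Let e0' := gen0 elin.
Let p0' := gen0 plin.
Let eD := genD elin.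
Let pD := genD plin.
Let eZ := genZ elin.
Let pZ := genZ plin.

Lemma WB j u v : W j u -> W j v -> W j (u - v).
Proof. by move=> hu hv; rewrite -scaleN1r; apply: WD => //; apply: WZ. Qed.

Definition E k := iter k e.
Definition P k := iter k phi.

Lemma E_lin k a u v : E k (a *: u + v) = a *: E k u + E k v.
Proof. by elim: k => //= k ih; rewrite /E /= -/(E k) ih elin. Qed.
Let E0 k := gen0 (@E_lin k).
Let ED k := genD (@E_lin k).
Let EZ k := genZ (@E_lin k).

Lemma EW k j v : W j v -> W (j - k) (E k v).
Proof.
elim: k => [|k ih] hv; first by rewrite subn0.
by rewrite /E /= -/(E k) subnS; apply: eW; apply: ih.
Qed.

Lemma PW k j v : W j v -> W (j + k) (P k v).
Proof.
elim: k => [|k ih] hv; first by rewrite addn0.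
by rewrite /P /= -/(P k) addnS; apply: pW; apply: ih.
Qed.

Lemma Ebig k j v : W j v -> (j < k)%N -> E k v = 0.
Proof.
move=> hv lt; have -> : k = ((k - j.+1) + 1 + j)%N by lia.
rewrite /E !iterD /= -/(E j) e0; first by rewrite -/(E _) E0.
by have := EW j hv; rewrite subnn.
Qed.

Definition w j : K := d%:R - (2 * j)%:R.

Lemma rel' j v : W j v -> e (phi v) = phi (e v) + w j *: v.
Proof. by move=> hv; rewrite -rel // addrC subrK. Qed.

Lemma comm1 n j v : W j v ->
  E n.+1 (phi v) = phi (E n.+1 v) + ((n.+1)%:R * (w j + n%:R)) *: E n v.
Proof.
move=> hv; elim: n => [|n ih].
  by rewrite /E /= (rel' hv) addr0 mul1r.
have -> : E n.+2 (phi v) = e (E n.+1 (phi v)) by [].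
rewrite ih eD eZ.
have -> : e (E n v) = E n.+1 v by [].
have -> : e (phi (E n.+1 v)) = phi (E n.+2 v) + (w j + (2 * n.+1)%:R) *: E n.+1 v.
  case: (leqP n.+1 j) => hle.
    rewrite (rel' (EW n.+1 hv)); congr (_ + _ *: _); rewrite /w.
    have -> : (2 * (j - n.+1))%:R = (2 * j)%:R - (2 * n.+1)%:R :> K.
      by rewrite mulnBr natrB // leq_mul2l hle orbT.
    ring.
  by rewrite (Ebig hv hle) (Ebig hv (ltn_trans hle (ltnSn _))) p0' e0' scaler0 addr0.
rewrite -[LHS]addrA -scalerDl; congr (_ + _ *: _); rewrite /w.
rewrite !natrM !mulrS; ring.
Qed.

Lemma hw n j v : W j v -> e v = 0 ->
  e (P n.+1 v) = ((n.+1)%:R * (w j - n%:R)) *: P n v.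
Proof.
move=> hv ev; elim: n => [|n ih].
  by rewrite /P /= (rel' hv) ev p0' add0r subr0 mul1r.
have -> : P n.+2 v = phi (P n.+1 v) by [].
rewrite (rel' (PW n.+1 hv)).
rewrite ih pZ.
have -> : phi (P n v) = P n.+1 v by [].
rewrite -scalerDl; congr (_ *: _); rewrite /w.
rewrite !natrM !natrD !mulrS; ring.
Qed.

Lemma hwE k j v : W j v -> e v = 0 ->
  E k (P k v) = (\prod_(i < k) ((i.+1)%:R * (w j - i%:R))) *: v.
Proof.
move=> hv ev; elim: k => [|k ih]; first by rewrite big_ord0 scale1r.
have -> : E k.+1 (P k.+1 v) = E k (e (P k.+1 v)) by rewrite /E iterSr.
by rewrite (hw k hv ev) EZ ih scalerA big_ord_recr /= mulrC.
Qed.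

Lemma natB_neq0 (a b : nat) : (a < b)%N -> (b%:R - a%:R : K) != 0.
Proof.
move=> lt; rewrite -natrB ?(ltnW lt) //.
by have -> : (b - a = (b - a).-1.+1)%N by lia.
Qed.

Lemma inj0 k j v : W j v -> phi v = 0 -> (d + k <= 2 * j)%N -> E k v = 0 -> v = 0.
Proof.
move=> hv pv; elim: k => [|k ih] hle hE; first by [].
apply: ih; first by lia.
have := comm1 k hv; rewrite pv E0 hE p0' add0r => /esym/eqP.
rewrite scaler_eq0 mulf_eq0 (negbTE (ch0 _)) /= => /orP [h|/eqP //].
exfalso; move: h; rewrite /w.
have -> : (d%:R - (2 * j)%:R + k%:R : K) = - ((2 * j)%:R - (d + k)%:R).
  by rewrite natrD; ring.
by rewrite oppr_eq0 (negbTE (natB_neq0 _)) //; lia.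
Qed.

Lemma inj k j v : W j v -> (d + k <= 2 * j)%N -> E k v = 0 -> v = 0.
Proof.
move=> hv; have [r hr] : exists r, (d < j + r)%N by exists d.+1; lia.
elim: r j k v hr hv => [|r ih] j k v hr hv hle hE.
  by apply: (top _ hv); lia.
case: (ltnP d j) => hdj; first exact: (top hdj hv).
have pv : phi v = 0.
  apply: (ih j.+1 k.+1) => //; first lia.
  - exact: pW.
  - lia.
  by rewrite (comm1 k hv) hE scaler0 addr0 /E /= -/(E k) hE e0' p0'.
exact: (inj0 hv pv hle hE).
Qed.

Lemma hwsurj k j v : W j v -> e v = 0 -> (2 * j + k <= d)%N ->
  exists u, W (j + k) u /\ E k u = v.
Proof.
move=> hv ev hle.
set C := \prod_(i < k) ((i.+1)%:R * (w j - i%:R) : K).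
have hC : C != 0.
  rewrite prodf_seq_neq0; apply/allP => i _ /=.
  rewrite mulf_neq0 // /w.
  have -> : (d%:R - (2 * j)%:R - i%:R : K) = d%:R - (2 * j + i)%:R by rewrite natrD; ring.
  by apply: natB_neq0; have := ltn_ord i; lia.
exists (C^-1 *: P k v); split; first by apply: WZ; apply: PW.
by rewrite EZ (hwE k hv ev) scalerA mulVf // scale1r.
Qed.

Lemma surj j k v : W j v -> (2 * j + k <= d)%N -> exists u, W (j + k) u /\ E k u = v.
Proof.
elim: j k v => [|j ih] k v hv hle; first by apply: hwsurj => //; apply: e0.
have hev : W j (e v) by exact: (eW hv).
have [z [hz hEz]] := ih k.+1 (e v) hev ltac:(lia).
have hy : W j.+1 (v - E k z).
  apply: WB => //; have := EW k hz; by have -> : (j + k.+1 - k = j.+1)%N by lia.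
have ey : e (v - E k z) = 0.
  rewrite -scaleN1r eD eZ scaleN1r; have -> : e (E k z) = E k.+1 z by []. by rewrite hEz subrr.
have [u' [hu' hEu']] := hwsurj hy ey hle.
exists (z + u'); split.
  by apply: WD => //; rewrite addSn -addnS.
by rewrite ED hEu' addrC subrK.
Qed.

End SL2.

Section Main.
Variables (K : fieldType) (c : nat) (hc : (1 < c)%N) (m : nat) (hm : (0 < m)%N) (t : K).
Hypothesis ch0 : forall n, (n.+1)%:R != 0 :> K.
Local Notation mp := {mpoly K[c]}.
Local Notation mon := 'X_{1..c}.
Local Notation Tt := (T hc t).
Local Notation sg := (sig hc t).
Local Notation sgi := (sigi hc t).

Definition nm : mon := [multinom (if i == i0 hc then m else 1%N) | i < c].
Definition FF : mp := Tt 'X_[nm].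
Local Notation d := (mdeg nm).
Local Notation eK := (@ee K c).
Local Notation ls := (@lsum K c).

Lemma nm_pos i : (0 < nm i)%N.
Proof. by rewrite mnmE; case: ifP. Qed.

Lemma FF_homog : FF \is d.-homog.
Proof. by apply: T_homog; rewrite dhomogX. Qed.

Lemma T0 : Tt 0 = 0.
Proof. exact: lin0. Qed.

Lemma contract_FF f : contract f FF = Tt (contract (sg f) 'X_[nm]).
Proof. exact: intertw. Qed.

Lemma annFF f : in_Ann FF f <-> contract (sg f) 'X_[nm] = 0.
Proof.
rewrite /in_Ann contract_FF; split; first exact: Tinj.
by move=> ->; rewrite T0.
Qed.

Lemma kill_box (g : mp) : contract g 'X_[nm] = 0 -> forall mu, (mu <= nm)%MM -> g@_mu = 0.
Proof. by move=> h mu hmu; rewrite -(cX_coef g hmu) h mcoeff0. Qed.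

Lemma FF_codim : full_codim FF.
Proof.
move=> l hl /annFF h.
have hs := sig_homog hc t hl.
suff : sg l = 0 by move=> e; rewrite -(sigi_sig hc t l) e (islin0 (sigi_islin hc t)).
apply: msuppnil0; case E: (msupp (sg l)) => [|mu r] //.
have hmu : mu \in msupp (sg l) by rewrite E mem_head.
have : mdeg mu = 1%N by move/dhomogP: hs => /(_ mu hmu).
move/eqP/mdeg1P => [i /eqP ei].
move: hmu; rewrite mcoeff_msupp kill_box ?eqxx // ei.
by rewrite lep1mP -lt0n nm_pos.
Qed.

Lemma contractXn (i : 'I_c) : contract ('X_i ^+ (nm i).+1) 'X_[nm] = 0 :> mp.
Proof.
rewrite mpolyXn contractXX /cmon.
case: ifP => // /mnm_lepP /(_ i); rewrite mulmnE mnm1E eqxx mul1n; lia.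
Qed.

Lemma decomp (r : seq mon) (G : mp) : (forall mu, mu \in r -> ~~ (mu <= nm)%MM) ->
  exists H : 'I_c -> mp, \sum_(mu <- r) G@_mu *: 'X_[mu] =
     \sum_(i < c) H i * 'X_i ^+ (nm i).+1.
Proof.
elim: r => [|mu r ih] h.
  by exists (fun _ => 0); rewrite big_nil big1 // => i _; rewrite mul0r.
have [H hH] := ih (fun x hx => h x (mem_behead (s := mu :: r) hx)).
have hmu := h mu (mem_head _ _).
have [i hi] : exists i, (nm i < mu i)%N.
  case/boolP: [exists i, (nm i < mu i)%N] => [/existsP //|].
  rewrite negb_exists => /forallP hall; exfalso; move/negP: hmu; apply.
  by apply/mnm_lepP => j; have := hall j; rewrite -leqNgt.
set k := (nm i).+1.
have hle : (U_(i) *+ k <= mu)%MM.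
  apply/mnm_lepP => j; rewrite mulmnE mnm1E; case: eqP => [<-|_]; rewrite ?mul1n ?mul0n //.
exists (fun j => H j + (if j == i then G@_mu *: 'X_[mu - U_(i) *+ k] else 0)).
rewrite big_cons hH addrC [RHS](eq_bigr _ (fun j _ => mulrDl _ _ _)).
rewrite big_split /=; congr (_ + _).
rewrite (bigD1 i) //= eqxx big1 ?addr0; last by move=> j /negbTE ->; rewrite mul0r.
by rewrite -scalerAl mpolyXn -mpolyXD submK.
Qed.

Lemma FF_CI : complete_intersection FF.
Proof.
exists (fun i => sgi ('X_i ^+ (nm i).+1)) => f; split.
  move=> /annFF h.
  set G := sg f.
  have hout : forall mu, mu \in msupp G -> ~~ (mu <= nm)%MM.
    move=> mu hmu; apply/negP => hle; move: hmu.
    by rewrite mcoeff_msupp (kill_box h hle) eqxx.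
  have [H hH] := decomp G hout.
  exists (fun i => sgi (H i)).
  rewrite -(sigi_sig hc t f) -/G {1}[G]mpolyE hH (islin_sum _ _ (sigi_islin hc t)).
  by apply: eq_bigr => i _; rewrite sigiM.
move=> [h ->]; rewrite /in_Ann (islin_sum _ _ (contract_linl _)) big1 // => i _.
by rewrite contractM contract_FF sig_sigi contractXn T0 contract0r.
Qed.

Definition WW (j : nat) (p : mp) := box nm p /\ p \is j.-homog.

Lemma WD j u v : WW j u -> WW j v -> WW j (u + v).
Proof. by move=> [b1 h1] [b2 h2]; split; [apply: boxD | apply: dhomogD]. Qed.
Lemma WZ j (a : K) u : WW j u -> WW j (a *: u).
Proof. by move=> [b1 h1]; split; [apply: boxZ | apply: dhomogZ]. Qed.
Lemma eW j v : WW j v -> WW j.-1 (ee v).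
Proof.
move=> [b1 h1]; split; first exact: box_contract.
by rewrite -subn1; apply: contract_homog h1; apply: lsum_homog.
Qed.
Lemma e0 v : WW 0 v -> ee v = 0.
Proof. by move=> [_ h]; apply: contract_homog0 h _; [apply: lsum_homog|]. Qed.
Lemma pW j v : WW j v -> WW j.+1 (Phi nm v).
Proof. by move=> [b1 h1]; split; [apply: box_Phi | apply: homog_Phi]. Qed.
Lemma topW j v : (d < j)%N -> WW j v -> v = 0.
Proof. by move=> lt [b h]; apply: box_top b h lt. Qed.
Lemma relW j v : WW j v -> ee (Phi nm v) - Phi nm (ee v) = (d%:R - (2 * j)%:R) *: v.
Proof. by move=> [b h]; apply: rel. Qed.

Definition injW := @inj K mp d WW eK (Phi nm) (@ee_lin K c) (Phi_lin nm) eW e0 pW topW relW ch0.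
Definition surjW := @surj K mp d WW eK (Phi nm) WD WZ (@ee_lin K c) (Phi_lin nm) eW e0 pW relW ch0.

Lemma lsum_pow k p : contract (ls ^+ k) p = E eK k p.
Proof.
elim: k => [|k ih]; first by rewrite expr0 contract1.
by rewrite exprS contractM ih.
Qed.

Lemma sgXn (x : mp) k : sg (x ^+ k) = sg x ^+ k.
Proof.
elim: k => [|k ih]; first by rewrite !expr0 sig1.
by rewrite !exprS sigM ih.
Qed.

Lemma sg_l : sg (sgi ls) = ls.
Proof. exact: sig_sigi. Qed.

Lemma box_nm : box nm ('X_[nm] : mp).
Proof. by apply: boxX; apply: lepm_refl. Qed.

Lemma WWf f i : f \is i.-homog -> WW (d - i) (contract (sg f) 'X_[nm]).
Proof.
move=> hf; split; first by apply: box_contract; exact: box_nm.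
by apply: contract_homog; [apply: sig_homog | rewrite dhomogX].
Qed.

Lemma key_l k f : contract ((sgi ls) ^+ k * f) FF =
  Tt (E eK k (contract (sg f) 'X_[nm])).
Proof.
by rewrite contractM contract_FF intertw sgXn sg_l lsum_pow.
Qed.

Lemma dual_lin (u : mp) : box nm u ->
  contract (lin (fun b => 'X_[nm - b]) u) 'X_[nm] = u.
Proof.
move=> /allP hu.
rewrite (islin_lin (phi := fun f => contract (lin (fun b => 'X_[nm - b]) f) 'X_[nm])); last first.
  by move=> a p q /=; rewrite lin_lin contract_linl.
rewrite {2}[u]mpolyE {1}/lin; apply: eq_big_seq => b hb; rewrite linX contractXX /cmon.
by rewrite lem_subr submBA ?hu // addmC addmK.
Qed.

Lemma FF_SLP : SLP FF.
Proof.
exists (sgi ls); split; first exact: (sigi_homog hc t (@lsum_homog K c)).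
move=> i k hk.
case: (leqP (2 * i + k) d) => hik.
  left => f hf; rewrite /in_Ann key_l => /Tinj hE.
  have hp := WWf hf.
  have hz : contract (sg f) 'X_[nm] = 0 by apply: (injW hp _ hE); lia.
  by rewrite /in_Ann contract_FF hz T0.
right => g hg.
case: (ltnP d (i + k)) => hd.
  exists 0; split; first exact: dhomog0.
  rewrite mulr0 subr0 /in_Ann contract_FF (contract_homog0 (j := d) (sig_homog hc t hg)) ?T0 //.
  by rewrite dhomogX.
have hq := WWf hg.
have [u [hu hEu]] := surjW (k := k) hq ltac:(lia).
have hu' : WW (d - i) u by move: hu; have -> : (d - (i + k) + k = d - i)%N by lia.
set h := lin (fun b => 'X_[nm - b]) u.
have hh : h \is i.-homog.
  case: hu' => /allP hb /dhomogP hd'; apply: lin_homog => b mb.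
  rewrite dhomogX; change (mdeg (nm - b)%MM == i); rewrite mdegB ?hb //.
  have -> : mdeg b = (d - i)%N by exact: hd'.
  by apply/eqP; lia.
exists (sgi h); split; first exact: sigi_homog.
rewrite /in_Ann (islinB (contract_linl _)) key_l sig_sigi dual_lin; last by case: hu'.
by rewrite hEu contract_FF subrr.
Qed.

End Main.

Section Supp.
Variables (K : fieldType) (c : nat) (hc : (1 < c)%N).
Hypothesis ch0 : forall n, (n.+1)%:R != 0 :> K.

Lemma nm_i0 m : nm hc m (i0 hc) = m.
Proof. by rewrite mnmE eqxx. Qed.
Lemma nm_i1 m : nm hc m (i1 hc) = 1%N.
Proof. by rewrite mnmE i10. Qed.

Lemma FF_E m (t : K) : FF hc m t =
  \sum_(0 <= q < m.+1) (t ^+ q * ('C(1 + q, q))%:R) *: 'X_[sh hc (nm hc m) q].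
Proof. by rewrite /FF /T linX /Tm nm_i0 nm_i1. Qed.

Lemma supp_s1 : size (msupp (FF hc 1 (0 : K))) = 1%N.
Proof.
rewrite FF_E big_nat_recr //= big_nat1 expr1 mul0r scale0r addr0 expr0 mul1r.
by rewrite addn0 bin0 scale1r sh0 msuppX.
Qed.

Lemma supp_s2 m : size (msupp (FF hc m (1 : K))) = m.+1.
Proof.
set r := map (sh hc (nm hc m)) (iota 0 m.+1).
have hsh : forall q, sh hc (nm hc m) q (i1 hc) = q.+1.
  by move=> q; rewrite shE i01 eqxx nm_i1 /= mul0n subn0 mul1n add1n.
have E : FF hc m (1 : K) = \sum_(mu <- r) ((mu (i1 hc))%:R *: 'X_[mu]).
  rewrite FF_E big_map /index_iota subn0; apply: eq_bigr => q _.
  by rewrite expr1n mul1r add1n binSn hsh.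
have ur : uniq r.
  rewrite map_inj_uniq ?iota_uniq // => q1 q2 eq.
  by have := hsh q1; rewrite eq hsh => -[].
rewrite E (perm_size (msupp_sumX ur _)) ?size_map ?size_iota //.
by move=> mu /mapP [q _ ->]; rewrite hsh.
Qed.

End Supp.

Unset Implicit Arguments.

Theorem proposition5p1 (K : closedFieldType) (charK0 : [pchar K] =i pred0)
    (s c : nat) (hs : (1 <= s)%N) (hc : (2 <= c)%N) :
  exists (F : {mpoly K[c]}) (d : nat),
    F \is d.-homog /\
    size (msupp F) = s /\
    complete_intersection F /\
    full_codim F /\
    SLP F.
Proof.
have ch0 : forall n, (n.+1)%:R != 0 :> K.
  by move=> n; rewrite (proj1 (pcharf0P K) charK0).
pose m := if s == 1%N then 1%N else s.-1.
pose t : K := if s == 1%N then 0 else 1.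
have hm : (0 < m)%N by rewrite /m; case: eqP => // ne; lia.
exists (FF hc m t), (mdeg (nm hc m)); split; first exact: FF_homog.
split.
  rewrite /m /t; case: eqP => [->|ne]; first exact: supp_s1.
  by rewrite supp_s2; [lia | exact: ch0].
split; first exact: FF_CI.
split; first exact: FF_codim.
exact: FF_SLP.
Qed.
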